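(* Let $P$ be the uniform distribution on $[0,1]$ and $\beta=\{\frac14,\frac12\}$. The conditional optimal set of five-points for $P$ with respect to $\beta$ is $\alpha_5=\{\frac1{12},\frac14,\frac12,\frac7{10},\frac9{10}\}$, with $V_5=\frac{613}{172800}$ ($\approx0.00354745$).
   Context: For a Borel probability measure $P$ on $\mathbb{R}$ and finite $\beta$ with $\mathrm{card}(\beta)=r$, for $n\ge r$, $V_n=\inf\{\int\min_{a\in\alpha\cup\beta}(x-a)^2dP(x):\mathrm{card}(\alpha)\le n-r\}$; a set $\alpha\cup\beta$ attaining the infimum, with each point of $\beta$ having a Voronoi region of positive $P$-measure, is a conditional optimal set of $n$-points with respect to $\beta$. *)

(* Defs.v *)
From HB Require Import structures.
From mathcomp Require Import all_boot all_order all_algebra finmap.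
From mathcomp Require Import all_classical all_reals all_analysis.
Set Implicit Arguments. Unset Strict Implicit. Unset Printing Implicit Defensive.
Import Order.TTheory GRing.Theory Num.Theory.
Local Open Scope classical_set_scope.
Local Open Scope ring_scope.
Local Open Scope fset_scope.

Section CondQuant.
Variable R : realType.

Definition sqdist_min (g : {fset R}) (x : R) : \bar R :=
  \big[Order.min/+oo%E]_(a <- enum_fset g) ((x - a) ^+ 2)%:E.

Definition distortion (P : probability (measurableTypeR R) R) (g : {fset R}) : \bar R :=
  (\int[P]_x sqdist_min g x)%E.

Definition cond_error (P : probability (measurableTypeR R) R) (n : nat) (beta : {fset R}) : \bar R :=
  ereal_inf [set distortion P (alpha `|` beta) |
             alpha in [set alpha : {fset R} | (#|` alpha| <= n - #|` beta|)%N]].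

Definition voronoi (g : {fset R}) (b : R) : set R :=
  [set x | forall a, a \in g -> `|x - b| <= `|x - a|].

Definition cond_optimal_set (P : probability (measurableTypeR R) R) (n : nat) (beta g : {fset R}) : Prop :=
  exists alpha : {fset R},
    [/\ (#|` alpha| <= n - #|` beta|)%N,
        g = alpha `|` beta,
        distortion P g = cond_error P n beta &
        forall b, b \in beta -> (0 < P (voronoi g b))%E].

Definition unif01 : probability (measurableTypeR R) R := uniform_prob (@ltr01 R).

End CondQuant.

(* Main.v *)
Require Import Defs.
From HB Require Import structures.
From mathcomp Require Import all_boot all_order all_algebra finmap.
From mathcomp Require Import all_classical all_reals all_analysis measurable_realfun.
From mathcomp Require Import ring lra zify.
Import Order.TTheory GRing.Theory Num.Theory numFieldNormedType.Exports.
Set Implicit Arguments. Unset Strict Implicit. Unset Printing Implicit Defensive.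
Local Open Scope ring_scope.
Local Open Scope classical_set_scope.
Section S.
Variable R : realType.
Notation mu := (@lebesgue_measure R).
Lemma memE (g : {fset R}) a : (a \in g) = (a \in enum_fset g). Proof. by []. Qed.
Lemma sq_le (g : {fset R}) x a : a \in g -> (sqdist_min g x <= ((x - a) ^+ 2)%:E)%E.
Proof.
rewrite memE /sqdist_min; elim: (enum_fset g) => [//|b s IH].
rewrite inE big_cons => /predU1P[->|/IH h]; first by rewrite ge_min lexx.
by rewrite ge_min h orbT.
Qed.
Lemma sq_ge (g : {fset R}) x h : (forall a, a \in g -> h <= (x - a) ^+ 2) -> (h%:E <= sqdist_min g x)%E.
Proof.
rewrite /sqdist_min => H0.
have : forall a, a \in enum_fset g -> h <= (x - a) ^+ 2 by exact: H0.
elim: (enum_fset g) => [|b s IH] H; first by rewrite big_nil leey.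
rewrite big_cons le_min lee_fin H ?mem_head //=; apply: IH => a ha; apply: H.
by rewrite inE ha orbT.
Qed.
Lemma sq_meas (g : {fset R}) : measurable_fun [set: R] (fun x : R => sqdist_min g x).
Proof.
rewrite /sqdist_min; elim: (enum_fset g) => [|b s IH].
  by under eq_fun do rewrite big_nil; exact: measurable_cst.
under eq_fun do rewrite big_cons.
apply: measurable_mine => //.
apply/measurable_EFinP.
by apply: measurable_funX; apply: measurable_funB => //; exact: measurable_cst.
Qed.
Lemma is_derive_cube (a x : R) : is_derive x 1 (fun y : R => (y - a) ^+ 3 / 3) ((x - a) ^+ 2).
Proof.
apply: is_derive_eq.
rewrite !scaler0 !subr0 /GRing.scale /=. by field.
Qed.

Lemma int_sq (a u v : R) : u <= v ->
  (\int[mu]_(x in `[u, v]) ((x - a) ^+ 2)%:E = (((v - a) ^+ 3 - (u - a) ^+ 3) / 3)%:E)%E.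
Proof.
rewrite le_eqVlt => /predU1P[<-|uv].
  by rewrite set_itv1 integral_set1 subrr mul0r.
rewrite (@continuous_FTC2 _ _ (fun y : R => (y - a) ^+ 3 / 3)) //.
- by rewrite -EFinB mulrBl.
- apply: derivable_within_continuous => x _.
  exact: ex_derive.
- have hc : continuous (fun y : R => (y - a) ^+ 3 / 3).
    move=> x; apply: differentiable_continuous.
    by apply/derivable1_diffP; have Hd := is_derive_cube a x; exact: ex_derive.
  split.
  + move=> x _; have Hd := is_derive_cube a x; exact: ex_derive.
  + apply: cvg_at_right_filter; apply: hc.
  + apply: cvg_at_left_filter; apply: hc.
- move=> x _; rewrite derive1E; have Hd := is_derive_cube a x; exact: derive_val.
Qed.

Section Int.
Variable F : R -> \bar R.
Hypothesis mF : measurable_fun [set: R] F.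
Hypothesis F0 : forall x, (0 <= F x)%E.

Lemma int_split (u w v : R) : u <= w -> w <= v ->
  (\int[mu]_(x in `[u, v]) F x = \int[mu]_(x in `[u, w]) F x + \int[mu]_(x in `[w, v]) F x)%E.
Proof.
move=> uw wv.
rewrite (@itv_bndbnd_setU _ _ _ (BRight w)) ?bnd_simp //.
rewrite ge0_integral_setU //=.
- rewrite integral_itv_obnd_cbnd //; exact: measurable_funS mF.
- exact: measurable_funS mF.
- apply/disj_setPS => x [] /=; rewrite !in_itv /= => /andP[_ h1] /andP[h2 _].
  by move: (lt_le_trans h2 h1); rewrite ltxx.
Qed.

Lemma int_sub (u v a b : R) : a <= u -> v <= b ->
  (\int[mu]_(x in `[u, v]) F x <= \int[mu]_(x in `[a, b]) F x)%E.
Proof.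
move=> au vb; apply: ge0_subset_integral => //.
- exact: measurable_funS mF.
- by move=> x; rewrite /= !in_itv /= => /andP[h1 h2]; rewrite (le_trans au h1) (le_trans h2 vb).
Qed.

Lemma int_lb (a u v : R) : u <= v ->
  (forall x, u <= x <= v -> (((x - a) ^+ 2)%:E <= F x)%E) ->
  ((((v - a) ^+ 3 - (u - a) ^+ 3) / 3)%:E <= \int[mu]_(x in `[u, v]) F x)%E.
Proof.
move=> uv H; rewrite -(@int_sq a u v uv); apply: ge0_le_integral => //.
- by move=> x _; rewrite lee_fin sqr_ge0.
- apply/measurable_EFinP; apply: measurable_funX; apply: measurable_funB.
  + exact: measurable_id.
  + exact: measurable_cst.
- apply: (measurable_funS _ _ mF) => //.
Qed.

Lemma int_ub (a u v : R) : u <= v ->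
  (forall x, u <= x <= v -> (F x <= ((x - a) ^+ 2)%:E)%E) ->
  (\int[mu]_(x in `[u, v]) F x <= (((v - a) ^+ 3 - (u - a) ^+ 3) / 3)%:E)%E.
Proof.
move=> uv H; rewrite -(@int_sq a u v uv); apply: ge0_le_integral => //.
- apply: (measurable_funS _ _ mF) => //.
- apply/measurable_EFinP; apply: measurable_funX; apply: measurable_funB.
  + exact: measurable_id.
  + exact: measurable_cst.
Qed.

Fixpoint pw_val (t0 : R) (l : seq (R * R)) : R :=
  if l is (t1, a) :: l' then ((t1 - a) ^+ 3 - (t0 - a) ^+ 3) / 3 + pw_val t1 l' else 0.
Fixpoint pw_end (t0 : R) (l : seq (R * R)) : R :=
  if l is (t1, _) :: l' then pw_end t1 l' else t0.
Fixpoint pw_lbP (t0 : R) (l : seq (R * R)) : Prop :=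
  if l is (t1, a) :: l' then
    [/\ t0 <= t1, (forall x, t0 <= x <= t1 -> (((x - a) ^+ 2)%:E <= F x)%E) & pw_lbP t1 l']
  else True.
Fixpoint pw_ubP (t0 : R) (l : seq (R * R)) : Prop :=
  if l is (t1, a) :: l' then
    [/\ t0 <= t1, (forall x, t0 <= x <= t1 -> (F x <= ((x - a) ^+ 2)%:E)%E) & pw_ubP t1 l']
  else True.

Lemma pw_lb_end t0 l : pw_lbP t0 l -> t0 <= pw_end t0 l.
Proof.
elim: l t0 => [//|[t1 a] l IH] t0 /= [h1 _ h3].
exact: le_trans h1 (IH _ h3).
Qed.

Lemma pw_ub_end t0 l : pw_ubP t0 l -> t0 <= pw_end t0 l.
Proof.
elim: l t0 => [//|[t1 a] l IH] t0 /= [h1 _ h3].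
exact: le_trans h1 (IH _ h3).
Qed.

Lemma pw_lb t0 l : pw_lbP t0 l -> ((pw_val t0 l)%:E <= \int[mu]_(x in `[t0, pw_end t0 l]) F x)%E.
Proof.
elim: l t0 => [|[t1 a] l IH] t0 /=.
  by move=> _; apply: integral_ge0 => x _; exact: F0.
move=> [h1 h2 h3]; rewrite (@int_split t0 t1) //; last exact: pw_lb_end.
rewrite EFinD; apply: leeD; first exact: int_lb.
exact: IH.
Qed.

Lemma pw_ub t0 l : pw_ubP t0 l -> (\int[mu]_(x in `[t0, pw_end t0 l]) F x <= (pw_val t0 l)%:E)%E.
Proof.
elim: l t0 => [|[t1 a] l IH] t0 /=.
  by move=> _; rewrite set_itv1 integral_set1.
move=> [h1 h2 h3]; rewrite (@int_split t0 t1) //; last exact: pw_ub_end.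
rewrite EFinD; apply: leeD; first exact: int_ub.
exact: IH.
Qed.

Lemma sqL (x a b : R) : a <= b -> 2 * x <= a + b -> (x - a) ^+ 2 <= (x - b) ^+ 2.
Proof.
move=> h1 h2; rewrite -subr_ge0.
have -> : (x - b) ^+ 2 - (x - a) ^+ 2 = (b - a) * (a + b - 2 * x) by ring.
by apply: mulr_ge0; rewrite subr_ge0.
Qed.

Lemma sqR (x a b : R) : b <= a -> a + b <= 2 * x -> (x - a) ^+ 2 <= (x - b) ^+ 2.
Proof.
move=> h1 h2; rewrite -subr_ge0.
have -> : (x - b) ^+ 2 - (x - a) ^+ 2 = (a - b) * (2 * x - a - b) by ring.
by apply: mulr_ge0; lra.
Qed.

Ltac sqtac := first [ exact: lexx | (apply: sqL; lra) | (apply: sqR; lra) ].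

Definition Phi5 (s1 s2 s3 s4 s5 : R) : R :=
  s1 ^+ 3 / 3 + (s2 - s1) ^+ 3 / 12 + (s3 - s2) ^+ 3 / 12 + (s4 - s3) ^+ 3 / 12
  + (s5 - s4) ^+ 3 / 12 + (1 - s5) ^+ 3 / 3.

Definition pieces5 (s1 s2 s3 s4 s5 : R) : seq (R * R) :=
  [:: (s1, s1); ((s1 + s2) / 2, s1); (s2, s2); ((s2 + s3) / 2, s2); (s3, s3);
      ((s3 + s4) / 2, s3); (s4, s4); ((s4 + s5) / 2, s4); (s5, s5); (1, s5)].

Lemma pieces5_val s1 s2 s3 s4 s5 : pw_val 0 (pieces5 s1 s2 s3 s4 s5) = Phi5 s1 s2 s3 s4 s5.
Proof. rewrite /pieces5 /Phi5 /=. by field. Qed.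

Lemma five (s1 s2 s3 s4 s5 : R) : 0 <= s1 -> s1 <= s2 -> s2 <= s3 -> s3 <= s4 -> s4 <= s5 -> s5 <= 1 ->
  (forall x h, 0 <= x <= 1 -> h <= (x - s1) ^+ 2 -> h <= (x - s2) ^+ 2 -> h <= (x - s3) ^+ 2 ->
     h <= (x - s4) ^+ 2 -> h <= (x - s5) ^+ 2 -> (h%:E <= F x)%E) ->
  ((Phi5 s1 s2 s3 s4 s5)%:E <= \int[mu]_(x in `[0%R, 1%R]) F x)%E.
Proof.
move=> h1 h2 h3 h4 h5 h6 H.
rewrite -pieces5_val.
have -> : (1 : R) = pw_end 0 (pieces5 s1 s2 s3 s4 s5) by [].
apply: pw_lb.
rewrite /=; repeat split; try lra;
  move=> x /andP[hx1 hx2]; apply: H; try lra; sqtac.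
Qed.
End Int.
Lemma sq0 (g : {fset R}) x : (0 <= sqdist_min g x)%E.
Proof. by apply: sq_ge => a _; exact: sqr_ge0. Qed.

Lemma distE (g : {fset R}) : distortion (unif01 R) g = (\int[mu]_(x in `[0%R, 1%R]) sqdist_min g x)%E.
Proof.
rewrite /distortion /unif01 integral_uniform.
- by rewrite subr0 invr1 mul1e.
- exact: sq_meas.
- exact: sq0.
Qed.

Definition bet : {fset R} := [fset 1/4; 1/2]%fset.
Definition Gs (p1 p2 p3 : R) : {fset R} := ([fset p1; p2; p3] `|` bet)%fset.
Lemma sq_geG (p1 p2 p3 x h : R) :
  h <= (x - p1) ^+ 2 -> h <= (x - p2) ^+ 2 -> h <= (x - p3) ^+ 2 ->
  h <= (x - 1/4) ^+ 2 -> h <= (x - 1/2) ^+ 2 ->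
  (h%:E <= sqdist_min (Gs p1 p2 p3) x)%E.
Proof.
move=> H1 H2 H3 H4 H5; apply: sq_ge => a.
rewrite /Gs /bet !inE.
by move=> /or3P[/orP[/orP[|]|]||] /eqP->.
Qed.

Lemma sq_leG (p1 p2 p3 x a : R) : a \in Gs p1 p2 p3 ->
  (sqdist_min (Gs p1 p2 p3) x <= ((x - a) ^+ 2)%:E)%E.
Proof. exact: sq_le. Qed.
End S.

Section S.
Variable R : realType.
Notation mu := (@lebesgue_measure R).
Definition clamp (c d p : R) := if p < c then c else if d < p then d else p.

Lemma clamp_in c d p : c <= d -> c <= clamp c d p <= d.
Proof. rewrite /clamp => cd; case: ltP => h1; [|case: ltP => h2]; apply/andP; split; lra. Qed.

Lemma clamp_dist c d p x : c <= x <= d -> (x - clamp c d p) ^+ 2 <= (x - p) ^+ 2.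
Proof.
rewrite /clamp => /andP[h1 h2]; case: ltP => h3; [|case: ltP => h4].
- apply: sqR; lra.
- apply: sqL; lra.
- exact: lexx.
Qed.

Lemma clamp_mono c d p q : c <= d -> p <= q -> clamp c d p <= clamp c d q.
Proof. rewrite /clamp => cd pq; case: (ltP p c); case: (ltP q c); case: (ltP d p); case: (ltP d q); lra. Qed.

Lemma clamp_le c d p e : c <= e -> p <= e -> clamp c d p <= e.
Proof. rewrite /clamp => ce pe; case: ltP => ?; [|case: ltP => ?]; lra. Qed.

Lemma clamp_ge c d p e : e <= d -> e <= p -> e <= clamp c d p.
Proof. rewrite /clamp => ce pe; case: ltP => ?; [|case: ltP => ?]; lra. Qed.

Lemma clamp_id c d p y : c < y -> y < d -> clamp c d p = y -> p = y.
Proof. rewrite /clamp => h1 h2; case: ltP => ?; [|case: ltP => ?]; lra. Qed.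

Ltac sqtac := first [ exact: lexx | (apply: sqL; lra) | (apply: sqR; lra) ].
Definition Vn : R := 613 / (12 ^+ 3 * 10 ^+ 2).
Lemma VnE : Vn = 1/1728 + 1/768 + 1/600.
Proof. by rewrite /Vn; field. Qed.

Lemma pw_lb' (F : R -> \bar R) (mF : measurable_fun [set: R] F) (F0 : forall x, (0 <= F x)%E)
  t0 l e v : pw_lbP F t0 l -> pw_end t0 l = e -> pw_val t0 l = v ->
  (v%:E <= \int[mu]_(x in `[t0, e]) F x)%E.
Proof. by move=> H <- <-; exact: pw_lb. Qed.

Lemma caseA p1 p2 p3 : p1 <= p2 -> p2 <= p3 -> 1/4 <= p1 ->
  (Vn%:E < distortion (unif01 R) (Gs p1 p2 p3))%E.
Proof.
move=> h12 h23 h1; rewrite distE.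
set F := sqdist_min _.
have mF : measurable_fun [set: R] F by exact: sq_meas.
have F0 : forall x, (0 <= F x)%E by move=> x; exact: sq0.
apply: (@lt_le_trans _ _ (1/192)%:E).
  by rewrite lte_fin /Vn; lra.
have Hs := @int_sub _ F mF F0 0 (1/4) 0 1 (lexx _).
have {Hs}Hs := Hs ltac:(lra).
apply: le_trans Hs.
apply: (pw_lb' mF F0 (l := [:: (1/4, 1/4)])) => //=; last by field.
split; [lra| |by []].
move=> x /andP[hx1 hx2]; apply: sq_geG; sqtac.
Qed.

Lemma tg0 (c t t0 : R) : 0 <= c -> 0 <= t -> 0 <= t0 -> 0 <= c * (t - t0) ^+ 2 * (t + 2 * t0).
Proof. move=> hc ht ht0; apply: mulr_ge0; [apply: mulr_ge0 => //; exact: sqr_ge0 | lra]. Qed.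

Lemma caseB p1 p2 p3 : p1 <= p2 -> p2 <= p3 -> p2 <= 1/2 ->
  (Vn%:E < distortion (unif01 R) (Gs p1 p2 p3))%E.
Proof.
move=> h12 h23 h2; rewrite distE.
set F := sqdist_min _.
have mF : measurable_fun [set: R] F by exact: sq_meas.
have F0 : forall x, (0 <= F x)%E by move=> x; exact: sq0.
set q := clamp (1/2) 1 p3.
have /andP[hq1 hq2] : 1/2 <= q <= 1 by apply: clamp_in; lra.
have hd : forall x, 1/2 <= x <= 1 -> (x - q) ^+ 2 <= (x - p3) ^+ 2 by move=> x hx; exact: clamp_dist.
set l := [:: ((1/2 + q) / 2, 1/2); (q, q); (1, q)].
have key : pw_val (1/2) l - 1/216 = 1/12 * ((q - 1/2) - 1/3) ^+ 2 * ((q - 1/2) + 2 * (1/3))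
   + 1/3 * ((1 - q) - 1/6) ^+ 2 * ((1 - q) + 2 * (1/6)).
  by rewrite /l /=; field.
apply: (@lt_le_trans _ _ (pw_val (1/2) l)%:E).
  rewrite lte_fin /Vn.
  have := @tg0 (1/12) (q - 1/2) (1/3). have := @tg0 (1/3) (1 - q) (1/6). lra.
have Hs := @int_sub _ F mF F0 (1/2) 1 0 1.
have {Hs}Hs := Hs ltac:(lra) (lexx _).
apply: le_trans Hs.
apply: (pw_lb' mF F0 (l := l)) => //=.
split; [lra| |split; [lra| |split; [lra| |by []]]].
- move=> x /andP[hx1 hx2]; apply: sq_geG; try sqtac.
  apply: le_trans (hd x _); [apply: sqL; lra | lra].
- move=> x /andP[hx1 hx2]; apply: sq_geG; try sqtac.
  apply: hd; lra.
- move=> x /andP[hx1 hx2]; apply: sq_geG; try sqtac.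
  apply: hd; lra.
Qed.

Lemma tg_eq (c t t0 : R) : 0 < c -> 0 < t + 2 * t0 -> c * (t - t0) ^+ 2 * (t + 2 * t0) <= 0 -> t = t0.
Proof.
move=> hc ht H.
case: (eqVneq t t0) => // ne.
have hs : 0 < (t - t0) ^+ 2 by rewrite exprn_even_gt0 //= subr_eq0.
have : 0 < c * (t - t0) ^+ 2 * (t + 2 * t0) by apply: mulr_gt0 => //; apply: mulr_gt0.
lra.
Qed.

Lemma caseC p1 p2 p3 : p1 <= p2 -> p2 <= p3 -> p1 < 1/4 -> 1/2 < p2 ->
  (Vn%:E <= distortion (unif01 R) (Gs p1 p2 p3))%E /\
  ((distortion (unif01 R) (Gs p1 p2 p3) <= Vn%:E)%E -> [/\ p1 = 1/12, p2 = 7/10 & p3 = 9/10]).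
Proof.
move=> h12 h23 h1 h2; rewrite distE.
set F := sqdist_min _.
have mF : measurable_fun [set: R] F by exact: sq_meas.
have F0 : forall x, (0 <= F x)%E by move=> x; exact: sq0.
set r := clamp 0 1 p1.
set q2 := clamp 0 1 p2.
set q3 := clamp 0 1 p3.
have /andP[hr1 _] : 0 <= r <= 1 by apply: clamp_in; lra.
have hr2 : r <= 1/4 by apply: clamp_le; lra.
have hq2 : 1/2 <= q2 by apply: clamp_ge; lra.
have hq23 : q2 <= q3 by apply: clamp_mono; lra.
have /andP[_ hq3] : 0 <= q3 <= 1 by apply: clamp_in; lra.
have H5 : ((Phi5 r (1/4) (1/2) q2 q3)%:E <= \int[mu]_(x in `[0%R, 1%R]) F x)%E.
  apply: five => //; try lra.
  move=> x h hx H1 H2 H3 H4 H5; apply: sq_geG => //.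
  - exact: le_trans H1 (clamp_dist _ hx).
  - exact: le_trans H4 (clamp_dist _ hx).
  - exact: le_trans H5 (clamp_dist _ hx).
have key : Phi5 r (1/4) (1/2) q2 q3 - Vn =
    1/3 * (r - 1/12) ^+ 2 * (r + 2 * (1/12))
  + 1/12 * ((1/4 - r) - 1/6) ^+ 2 * ((1/4 - r) + 2 * (1/6))
  + 1/12 * ((q2 - 1/2) - 1/5) ^+ 2 * ((q2 - 1/2) + 2 * (1/5))
  + 1/12 * ((q3 - q2) - 1/5) ^+ 2 * ((q3 - q2) + 2 * (1/5))
  + 1/3 * ((1 - q3) - 1/10) ^+ 2 * ((1 - q3) + 2 * (1/10)).
  by rewrite /Phi5 /Vn; field.
have t1 := @tg0 (1/3) r (1/12).
have t2 := @tg0 (1/12) (1/4 - r) (1/6).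
have t3 := @tg0 (1/12) (q2 - 1/2) (1/5).
have t4 := @tg0 (1/12) (q3 - q2) (1/5).
have t5 := @tg0 (1/3) (1 - q3) (1/10).
split.
  apply: le_trans H5; rewrite lee_fin; lra.
move=> Hle.
have HP : Phi5 r (1/4) (1/2) q2 q3 <= Vn.
  by rewrite -lee_fin; apply: le_trans H5 Hle.
have e1 : r = 1/12 by apply: (@tg_eq (1/3)); lra.
have e3 : q2 - 1/2 = 1/5 by apply: (@tg_eq (1/12)); lra.
have e4 : q3 - q2 = 1/5 by apply: (@tg_eq (1/12)); lra.
split.
- by apply: (@clamp_id 0 1); rewrite -/r; lra.
- by apply: (@clamp_id 0 1); rewrite -/q2; lra.
- by apply: (@clamp_id 0 1); rewrite -/q3; lra.
Qed.
End S.

Section S.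
Variable R : realType.
Notation mu := (@lebesgue_measure R).
Local Notation Vn := (@Vn R).
Ltac sqtac := first [ exact: lexx | (apply: sqL; lra) | (apply: sqR; lra) ].

Lemma mainL (p1 p2 p3 : R) : p1 <= p2 -> p2 <= p3 ->
  (Vn%:E <= distortion (unif01 R) (Gs p1 p2 p3))%E /\
  ((distortion (unif01 R) (Gs p1 p2 p3) <= Vn%:E)%E -> [/\ p1 = 1/12, p2 = 7/10 & p3 = 9/10]).
Proof.
move=> h12 h23.
have strict : (Vn%:E < distortion (unif01 R) (Gs p1 p2 p3))%E ->
  (Vn%:E <= distortion (unif01 R) (Gs p1 p2 p3))%E /\
  ((distortion (unif01 R) (Gs p1 p2 p3) <= Vn%:E)%E -> [/\ p1 = 1/12, p2 = 7/10 & p3 = 9/10]).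
  move=> H; split; first exact: ltW.
  by move=> H'; have := lt_le_trans H H'; rewrite ltxx.
case: (leP (1/4) p1) => h1; first exact/strict/caseA.
case: (leP p2 (1/2)) => h2; first exact/strict/caseB.
exact: caseC.
Qed.

Ltac permtac a b c :=
  exists a, b, c; split; [lra|lra|apply/fsetP; intros ?; rewrite !inE;
    by do ![case: (_ == _)]].

Lemma sort3 (a b c : R) : exists t1 t2 t3,
  [/\ t1 <= t2, t2 <= t3 & [fset a; b; c]%fset = [fset t1; t2; t3]%fset].
Proof.
case: (leP a b) => hab; case: (leP b c) => hbc; case: (leP a c) => hac;
  first [ permtac a b c | permtac a c b | permtac b a c | permtac b c a
        | permtac c a b | permtac c b a ].
Qed.

Lemma repr3 (alpha : {fset R}) : (#|` alpha| <= 3)%N ->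
  exists t1 t2 t3, [/\ t1 <= t2, t2 <= t3 & (alpha `|` bet R)%fset = Gs t1 t2 t3].
Proof.
move=> hc.
have [a [b [c habc]]] : exists a b c : R, forall x,
    (x \in (alpha `|` bet R)%fset) = (x \in ([fset a; b; c] `|` bet R)%fset).
  have mem : forall x, (x \in alpha) = (x \in enum_fset alpha) by [].
  move: hc.
  case E: (enum_fset alpha) => [|a [|b [|c [|d l]]]] // _.
  - exists (1/4), (1/4), (1/4) => x; rewrite in_fsetU mem E /bet !inE.
    by do ![case: (_ == _)].
  - exists a, a, a => x; rewrite in_fsetU mem E /bet !inE.
    by do ![case: (_ == _)].
  - exists a, b, b => x; rewrite in_fsetU mem E /bet !inE.
    by do ![case: (_ == _)].
  - exists a, b, c => x; rewrite in_fsetU mem E /bet !inE.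
    by do ![case: (_ == _)].
have [t1 [t2 [t3 [h1 h2 e]]]] := sort3 a b c.
exists t1, t2, t3; split => //; apply/fsetP => x; by rewrite habc /Gs -e.
Qed.

Lemma pw_ub' (F : R -> \bar R) (mF : measurable_fun [set: R] F) (F0 : forall x, (0 <= F x)%E)
  t0 l e v : pw_ubP F t0 l -> pw_end t0 l = e -> pw_val t0 l = v ->
  (\int[mu]_(x in `[t0, e]) F x <= v%:E)%E.
Proof. by move=> H <- <-; exact: pw_ub. Qed.

Lemma opt_ub : (distortion (unif01 R) (Gs (1/12) (7/10) (9/10)) <= Vn%:E)%E.
Proof.
rewrite distE.
set F := sqdist_min _.
have mF : measurable_fun [set: R] F by exact: sq_meas.
have F0 : forall x, (0 <= F x)%E by move=> x; exact: sq0.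
apply: (pw_ub' mF F0 (l := pieces5 (1/12) (1/4) (1/2) (7/10) (9/10)));
  last by rewrite pieces5_val /Phi5 /Vn; field.
2: by [].
rewrite /=; repeat split; try lra; move=> x _; apply: sq_leG;
  by rewrite /Gs /bet !inE eqxx ?orbT.
Qed.

Lemma abs_sq (u v : R) : (`|u| <= `|v|) = (u ^+ 2 <= v ^+ 2).
Proof. by rewrite -ler_sqr ?nnegrE ?normr_ge0 // !real_normK ?num_real. Qed.

Lemma memG5 (a : R) : a \in Gs (1/12) (7/10) (9/10) ->
  a = 1/12 \/ a = 7/10 \/ a = 9/10 \/ a = 1/4 \/ a = 1/2.
Proof.
rewrite /Gs /bet !inE => /or3P[/orP[/orP[|]|]||] /eqP ->; tauto.
Qed.

Lemma vorE1 : voronoi (Gs (1/12) (7/10) (9/10)) (1/4) = `[(1/6 : R), 3/8]%classic.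
Proof.
apply/seteqP; split => x /=.
- move=> H; rewrite in_itv /=.
  have h1 := H (1/12) ltac:(by rewrite /Gs /bet !inE eqxx ?orbT).
  have h2 := H (1/2) ltac:(by rewrite /Gs /bet !inE eqxx ?orbT).
  rewrite abs_sq in h1; rewrite abs_sq in h2.
  apply/andP; split; nra.
- rewrite in_itv /= => /andP[hx1 hx2] a /memG5[|[|[|[|]]]]->; rewrite abs_sq; sqtac.
Qed.

Lemma vorE2 : voronoi (Gs (1/12) (7/10) (9/10)) (1/2) = `[(3/8 : R), 3/5]%classic.
Proof.
apply/seteqP; split => x /=.
- move=> H; rewrite in_itv /=.
  have h1 := H (1/4) ltac:(by rewrite /Gs /bet !inE eqxx ?orbT).
  have h2 := H (7/10) ltac:(by rewrite /Gs /bet !inE eqxx ?orbT).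
  rewrite abs_sq in h1; rewrite abs_sq in h2.
  apply/andP; split; nra.
- rewrite in_itv /= => /andP[hx1 hx2] a /memG5[|[|[|[|]]]]->; rewrite abs_sq; sqtac.
Qed.

Lemma unif_itv (u v : R) :
  unif01 R `[u, v]%classic = (\int[mu]_(x in `[u, v]) (uniform_pdf 0 1 x)%:E)%E.
Proof. by []. Qed.

Lemma unif_pos (u v c : R) : 0 <= u -> u < v -> v <= 1 -> u <= c -> c <= v ->
  0 < (v - c) ^+ 3 - (u - c) ^+ 3 ->
  (0 < unif01 R `[u, v]%classic)%E.
Proof.
move=> h1 h2 h3 h4 h5 h6; rewrite unif_itv.
have mF : measurable_fun [set: R] (fun x => (uniform_pdf 0 1 x)%:E).
  by apply/measurable_EFinP; exact: measurable_uniform_pdf.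
have F0 : forall x : R, (0 <= (uniform_pdf 0 1 x)%:E)%E.
  by move=> x; rewrite lee_fin uniform_pdf_ge0 //; lra.
apply: (@lt_le_trans _ _ ((((v - c) ^+ 3 - (u - c) ^+ 3) / 3)%:E)).
  rewrite lte_fin; lra.
have hP : forall x, u <= x <= v -> (((x - c) ^+ 2)%:E <= (uniform_pdf 0 1 x)%:E)%E.
  move=> x /andP[hx1 hx2]; rewrite lee_fin /uniform_pdf.
  have -> : (0 <= x <= 1) = true by apply/andP; split; lra.
  rewrite subr0 invr1; nra.
exact: (int_lb mF (ltW h2) hP).
Qed.

Lemma vor_pos (b : R) : b \in bet R -> (0 < unif01 R (voronoi (Gs (1/12) (7/10) (9/10)) b))%E.
Proof.
rewrite /bet !inE => /orP[] /eqP ->.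
- rewrite vorE1; apply: (@unif_pos _ _ (1/4)); lra.
- rewrite vorE2; apply: (@unif_pos _ _ (1/2)); lra.
Qed.

Lemma card_bet : #|` bet R| = 2%N.
Proof. by rewrite cardfs2 (_ : (1/4 : R) != 1/2 = true) //; apply/eqP; lra. Qed.

Lemma card3 (a b c : R) : (#|` [fset a; b; c]%fset| <= 3)%N.
Proof. rewrite cardfsU cardfs1 cardfsU !cardfs1; lia. Qed.

Lemma opt_eq : distortion (unif01 R) (Gs (1/12) (7/10) (9/10)) = Vn%:E.
Proof.
apply/eqP; rewrite eq_le opt_ub /=.
by case: (@mainL (1/12) (7/10) (9/10) ltac:(lra) ltac:(lra)).
Qed.

Lemma cond_errE : cond_error (unif01 R) 5 (bet R) = Vn%:E.
Proof.
rewrite /cond_error card_bet /=.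
apply/eqP; rewrite eq_le; apply/andP; split.
- rewrite -opt_eq; apply: ereal_inf_lbound.
  by exists [fset 1/12; 7/10; 9/10]%fset => //=; exact: card3.
- apply/ereal_infP => y [alpha /= halpha <-].
  have [t1 [t2 [t3 [h1 h2 ->]]]] := repr3 halpha.
  by case: (mainL h1 h2).
Qed.
End S.

Local Close Scope classical_set_scope.
Local Open Scope fset_scope.

Theorem proposition3p4 (R : realType) :
  let P := unif01 R in
  let beta : {fset R} := [fset 1/4; 1/2] in
  let alpha5 : {fset R} := [fset 1/12; 1/4; 1/2; 7/10; 9/10] in
  [/\ cond_optimal_set P 5 beta alpha5,
      (forall g, cond_optimal_set P 5 beta g -> g = alpha5) &
      cond_error P 5 beta = (613 / (12 ^+ 3 * 10 ^+ 2))%:E].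
Proof.
move=> P beta alpha5.
have ha : alpha5 = Gs (1/12) (7/10) (9/10).
  by apply/fsetP => x; rewrite /alpha5 /Gs /bet !inE; do ![case: (_ == _)].
have hce : cond_error P 5 beta = (613 / (12 ^+ 3 * 10 ^+ 2))%:E := cond_errE R.
split => //.
- exists [fset 1/12; 7/10; 9/10]; split.
  + by rewrite (card_bet R); exact: card3.
  + exact: ha.
  + by rewrite hce ha opt_eq.
  + by move=> b hb; rewrite ha; exact: vor_pos.
- move=> g [alpha [hc -> hd _]].
  rewrite (card_bet R) /= in hc.
  have [t1 [t2 [t3 [h1 h2 e]]]] := repr3 hc.
  rewrite e in hd *; rewrite ha.
  have [_ H] := mainL h1 h2.
  have [-> -> ->] := H ltac:(by rewrite hd hce).
  by [].
Qed.
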